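(* $N[k]=N[\bar k]+N[k^\perp]$, where for measurable $j:\mathcal{X}\times\mathcal{X}\to\mathbb{R}$, $N[j]=\int_\mathcal{X}\int_\mathcal{X}j(x,y)^2\,d\mu(x)\,d\mu(y)$, $\bar k(x,y)=\int_\mathcal{G}k(x,gy)\,d\lambda(g)$ and $k^\perp=k-\bar k$.
   Context: $\mathcal{G}$ is a compact, second countable, Hausdorff topological group with Haar probability measure $\lambda$, acting measurably on a nonempty Polish space $\mathcal{X}$; $\mu$ is a $\mathcal{G}$-invariant Borel probability measure on $\mathcal{X}$ with $\mathrm{supp}\,\mu=\mathcal{X}$. $k:\mathcal{X}\times\mathcal{X}\to\mathbb{R}$ is a measurable symmetric positive definite kernel with $k(\cdot,x)$ continuous for all $x$ and $\sup_xk(x,x)<\infty$. *)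

(* Defs.v *)
From HB Require Import structures.
From mathcomp Require Import all_boot all_order all_algebra.
From mathcomp Require Import all_classical all_reals all_analysis.
Set Implicit Arguments. Unset Strict Implicit. Unset Printing Implicit Defensive.
Import Order.TTheory GRing.Theory Num.Theory.
Import numFieldNormedType.Exports.
Local Open Scope classical_set_scope.
Local Open Scope ring_scope.

Notation borel T := (g_sigma_algebraType (@open T)).

Definition polish_space (R : realType) (T : ptopologicalType) : Prop :=
  (exists S : set T, countable S /\ dense S) /\
  exists d : T -> T -> R,
    [/\ (forall x y, d x y = 0 <-> x = y),
        (forall x y, d x y = d y x),
        (forall x y z, d x z <= d x y + d y z),
        (forall A : set T, open A <->
           (forall x, A x -> exists2 e : R, 0 < e & [set y | d x y < e] `<=` A)) &
        (forall u : nat -> T,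
           (forall e : R, 0 < e -> exists N : nat, forall m n : nat,
               (N <= m)%N -> (N <= n)%N -> d (u m) (u n) < e) ->
           exists l : T, forall e : R, 0 < e -> exists N : nat, forall n : nat,
               (N <= n)%N -> d (u n) l < e)].

Definition compact_sc_hausdorff_group (G : ptopologicalType)
  (mul : G -> G -> G) (inv : G -> G) (one : G) : Prop :=
  [/\ (forall a b c, mul a (mul b c) = mul (mul a b) c),
      (forall a, mul one a = a /\ mul a one = a) &
      (forall a, mul (inv a) a = one /\ mul a (inv a) = one)] /\
  [/\ continuous (fun p : G * G => mul p.1 p.2),
      continuous inv,
      compact [set: G],
      @second_countable G &
      hausdorff_space G].

(* A Haar probability measure: a left-invariant Borel probability measure
   (for compact metrizable groups, every finite Borel measure is regular). *)
Definition haar_probability (R : realType) (G : ptopologicalType)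
  (mul : G -> G -> G) (lam : probability (borel G) R) : Prop :=
  forall (g : G) (A : set (borel G)), measurable A -> lam (mul g @` A) = lam A.

Definition measurable_action (G X : ptopologicalType)
  (mul : G -> G -> G) (one : G) (act : G -> X -> X) : Prop :=
  [/\ (forall x, act one x = x),
      (forall g h x, act (mul g h) x = act g (act h x)) &
      measurable_fun [set: (borel G * borel X)%type]
        ((fun p : borel G * borel X => act p.1 p.2) : _ -> borel X)].

Definition msupport (R : realType) (X : ptopologicalType)
  (mu : {measure set (borel X) -> \bar R}) : set X :=
  [set x | forall U : set X, open U -> U x -> (0 < mu U)%E].

Definition pos_def_kernel (R : realType) (X : Type) (k : X -> X -> R) : Prop :=
  forall (n : nat) (xs : 'I_n -> X) (c : 'I_n -> R),
    0 <= \sum_(i < n) \sum_(j < n) c i * c j * k (xs i) (xs j).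

Definition Nsq (R : realType) (X : ptopologicalType)
  (mu : {measure set (borel X) -> \bar R}) (j : X -> X -> R) : \bar R :=
  (\int[mu]_y \int[mu]_x ((j x y) ^+ 2)%:E)%E.

Definition kbar (R : realType) (G X : ptopologicalType)
  (lam : {measure set (borel G) -> \bar R}) (act : G -> X -> X)
  (k : X -> X -> R) : X -> X -> R :=
  fun x y => Rintegral lam [set: borel G] (fun g : borel G => k x (act g y)).

Definition kperp (R : realType) (G X : ptopologicalType)
  (lam : {measure set (borel G) -> \bar R}) (act : G -> X -> X)
  (k : X -> X -> R) : X -> X -> R :=
  fun x y => k x y - kbar lam act k x y.

(* Main.v *)
Require Import Defs.
From HB Require Import structures.
From mathcomp Require Import all_boot all_order all_algebra.
From mathcomp Require Import all_classical all_reals all_analysis.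
From mathcomp Require Import measurable_realfun.
From mathcomp Require Import ring lra.
Import Order.TTheory GRing.Theory Num.Theory.
Import numFieldNormedType.Exports.
Local Open Scope classical_set_scope.
Local Open Scope ring_scope.
Lemma cont_meas (S T : ptopologicalType) (f : S -> T) :
  continuous f -> measurable_fun [set: borel S] (f : borel S -> borel T).
Proof.
move=> cf.
have H : preimage_set_system [set: borel S] (f : borel S -> borel T) (@open T) `<=` measurable.
  move=> _ [B oB <-]; apply: sub_sigma_algebra; rewrite setTI.
  by move/continuousP : cf; apply.
exact: (@measurability _ _ (borel S) (borel T) setT f (@open T) erefl H).
Qed.


Section bnd0.
Context {R : realType} d (T : measurableType d) (P : {measure set T -> \bar R}).
Lemma bint0 (f : T -> R) : (P setT < +oo)%E -> measurable_fun setT f ->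
  (exists M, forall x, `|f x| <= M) -> P.-integrable setT (EFin \o f).
Proof.
move=> Pfin mf [M hM]; apply: measurable_bounded_integrable => //.
exists M; split; first by apply: ger0_real; exact: le_trans (normr_ge0 _) (hM point).
move=> x Mx y _; apply: le_trans (hM y) _; exact: ltW.
Qed.
End bnd0.

Section bnd.
Context {R : realType} d (T : measurableType d) (P : probability T R).

Lemma bint (f : T -> R) : measurable_fun setT f -> (exists M, forall x, `|f x| <= M) ->
  P.-integrable setT (EFin \o f).
Proof.
apply: bint0; by apply: (le_lt_trans (probability_le1 P measurableT)); rewrite ltry.
Qed.

Lemma RintE (f : T -> R) : measurable_fun setT f -> (exists M, forall x, `|f x| <= M) ->
  (\int[P]_(x in setT) (f x)%:E)%E = (Rintegral P setT f)%:E.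
Proof.
move=> mf bf; rewrite /Rintegral fineK//; apply: integrable_fin_num => //; exact: bint.
Qed.

Lemma Rint_cst (c : R) : Rintegral P setT (fun _ => c) = c.
Proof. rewrite Rintegral_cst// [X in _ * fine X](_ : _ = 1%E) ?mulr1//; exact: probability_setT. Qed.

End bnd.

Section fub.
Context {R : realType} d1 d2 (T1 : measurableType d1) (T2 : measurableType d2)
  (P1 : probability T1 R) (P2 : probability T2 R).

Lemma prod_int (F : T1 * T2 -> R) : measurable_fun setT F ->
  (exists M, forall z, `|F z| <= M) -> (P1 \x P2)%E.-integrable setT (EFin \o F).
Proof.
move=> mF bF; apply: bint0 => //.
rewrite -setXTT.
rewrite [X in (X < _)%E](_ : _ = (P1 setT * P2 setT)%E); last exact: product_measure1E.
have -> : P1 setT = 1%E by exact: probability_setT.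
have -> : P2 setT = 1%E by exact: probability_setT.
by rewrite mule1 ltry.
Qed.

Lemma Rfub (F : T1 * T2 -> R) : measurable_fun setT F ->
  (exists M, forall z, `|F z| <= M) ->
  Rintegral P1 setT (fun x => Rintegral P2 setT (fun y => F (x, y))) =
  Rintegral P2 setT (fun y => Rintegral P1 setT (fun x => F (x, y))).
Proof.
move=> mF [M bF]; rewrite /Rintegral; congr fine.
transitivity (\int[P1]_x \int[P2]_y (EFin \o F) (x, y))%E.
  apply: eq_integral => x _; rewrite -RintE //.
  - by apply: measurableT_comp => //; apply: measurable_fun_pair => //.
  - by exists M => y.
transitivity (\int[P2]_y \int[P1]_x (EFin \o F) (x, y))%E.
  apply: Fubini; exact: prod_int mF (ex_intro _ M bF).
apply: eq_integral => y _; rewrite -RintE //.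
- by apply: measurableT_comp => //; apply: measurable_fun_pair => //.
- by exists M => x.
Qed.

Lemma Rpartial_meas (F : T1 * T2 -> R) : measurable_fun setT F ->
  (exists M, forall z, `|F z| <= M) ->
  measurable_fun setT (fun x => Rintegral P2 setT (fun y => F (x, y))).
Proof.
move=> mF [M bF]; apply/measurable_EFinP.
have -> : (EFin \o (fun x => Rintegral P2 setT (fun y => F (x, y)))) =
   fubini_F P2 (EFin \o F).
  apply/funext => x /=; rewrite /fubini_F -RintE //.
  - by apply: measurableT_comp => //; apply: measurable_fun_pair => //.
  - by exists M => y.
apply: (measurable_fubini_F (m1 := P1)); exact: prod_int mF (ex_intro _ M bF).
Qed.

End fub.

Section inv.
Context {R : realType} d (T : measurableType d) (P : probability T R).

Lemma Rint_invariant (phi : T -> T) : measurable_fun setT phi ->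
  (forall A, measurable A -> P (phi @^-1` A) = P A) ->
  forall f : T -> R, measurable_fun setT f -> (exists M, forall x, `|f x| <= M) ->
  Rintegral P setT (fun x => f (phi x)) = Rintegral P setT f.
Proof.
move=> mphi hphi f mf bf; rewrite /Rintegral; congr fine.
have ib : P.-integrable (phi @^-1` setT) ((EFin \o f) \o phi).
  rewrite preimage_setT; apply: bint => //; first exact: measurableT_comp.
  by case: bf => M hM; exists M.
have h := @integral_pushforward _ _ T T R phi mphi P setT (EFin \o f)
  (proj2 (measurable_EFinP _ _) mf) ib measurableT.
rewrite preimage_setT in h.
transitivity (\int[pushforward P phi]_(y in setT) (EFin \o f) y)%E.
  by rewrite h.
apply: eq_measure_integral => A mA _ /=; exact: hphi.
Qed.

Lemma Rint_bound (f : T -> R) M : measurable_fun setT f -> (forall x, `|f x| <= M) ->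
  `|Rintegral P setT f| <= M.
Proof.
move=> mf hM.
have i1 : P.-integrable setT (EFin \o f) by apply: bint => //; exists M.
apply: le_trans (le_normr_Rintegral _ _) _ => //.
apply: le_trans (le_Rintegral (f2 := fun _ => M) _ _ _ _) _ => //.
- apply: (@bint _ _ _ P (fun x => `|f x|)); first exact: measurableT_comp.
  by exists M => x; rewrite normr_id.
- by apply: bint => //; exists `|M| => x.
- by rewrite Rint_cst.
Qed.

End inv.
Lemma kbound {R : realType} (X : Type) (k : X -> X -> R) M :
  (forall x y, k x y = k y x) -> pos_def_kernel k -> (forall x, k x x <= M) ->
  forall x y, `|k x y| <= M.
Proof.
move=> ks hpd hM x y.
have h1 := hpd 2%N (fun i : 'I_2 => if val i == 0%N then x else y)
  (fun i => if val i == 0%N then 1 else -1).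
have h2 := hpd 2%N (fun i : 'I_2 => if val i == 0%N then x else y)
  (fun i => 1).
rewrite !big_ord_recr !big_ord0 /= in h1 h2.
rewrite (ks y x) in h1 h2.
have := hM x; have := hM y.
rewrite ler_norml; move=> a b; apply/andP; split; lra.
Qed.

Lemma NsqE {R : realType} (X : ptopologicalType) (mu : probability (borel X) R)
  (j : X -> X -> R) :
  measurable_fun [set: (borel X * borel X)%type] (fun p : borel X * borel X => j p.1 p.2) ->
  (exists M, forall x y, `|j x y| <= M) ->
  Nsq mu j = (Rintegral mu setT (fun x : borel X => Rintegral mu setT (fun y : borel X => j x y ^+ 2)))%:E.
Proof.
move=> mj [M hM]; rewrite /Nsq.
pose F := fun p : borel X * borel X => ((j p.1 p.2)^+2)%:E.
have mF2 : measurable_fun [set: (borel X * borel X)%type] (fun p : borel X * borel X => (j p.1 p.2)^+2).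
  exact: measurable_funX.
have mF : measurable_fun setT F by apply/measurable_EFinP.
have sec : forall x, measurable_fun [set: borel X] (fun y : borel X => j x y ^+ 2).
  move=> x; have h : measurable_fun [set: borel X] (fun y : borel X => ((x, y) : borel X * borel X)).
    exact: measurable_fun_pair.
  exact: (measurableT_comp mF2 h).
have F0 : forall p, (0 <= F p)%E by move=> p; rewrite lee_fin sqr_ge0.
have bF : exists N, forall p : borel X * borel X, `|(j p.1 p.2)^+2| <= N.
  exists (M ^+ 2) => p; rewrite normrX !expr2.
  apply: ler_pM; [exact: normr_ge0|exact: normr_ge0|exact: hM|exact: hM].
transitivity (\int[mu]_x \int[mu]_y F (x, y))%E.
  have ft := fubini_tonelli (m1:=mu) (m2:=mu) F mF F0. by rewrite ft.
transitivity (\int[mu]_x (Rintegral mu setT (fun y : borel X => j x y ^+ 2))%:E)%E.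
  apply: eq_integral => x _; rewrite -RintE //.
  by case: bF => N hN; exists N => y; exact: (hN (x, y)).
rewrite RintE //.
- exact: (@Rpartial_meas _ _ _ _ _ mu mu (fun p => j p.1 p.2 ^+ 2)).
- case: bF => N hN; exists N => x; apply: Rint_bound.
  + exact: sec.
  + by move=> y; exact: (hN (x, y)).
Qed.

Section bnds.
Context {R : realType} (T : Type).
Implicit Types (a b : T -> R).

Lemma bndM a b A B : (forall y, `|a y| <= A) -> (forall y, `|b y| <= B) ->
  forall y, `|a y * b y| <= A * B.
Proof.
move=> ha hb y; rewrite normrM.
apply: ler_pM; [exact: normr_ge0|exact: normr_ge0|exact: ha|exact: hb].
Qed.

Lemma bndB a b A B : (forall y, `|a y| <= A) -> (forall y, `|b y| <= B) ->
  forall y, `|a y - b y| <= A + B.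
Proof.
move=> ha hb y; apply: le_trans (ler_normB _ _) _; exact: lerD.
Qed.

Lemma bndZ a A (c : R) : (forall y, `|a y| <= A) ->
  forall y, `|c * a y| <= `|c| * A.
Proof.
move=> ha y; rewrite normrM; apply: ler_wpM2l => //; exact: ha.
Qed.

End bnds.

Lemma outer_int {R : realType} (X : ptopologicalType) (mu : probability (borel X) R)
  (j : X -> X -> R) :
  measurable_fun [set: (borel X * borel X)%type] (fun p : borel X * borel X => j p.1 p.2) ->
  (exists M, forall x y, `|j x y| <= M) ->
  mu.-integrable setT (EFin \o (fun x : borel X => Rintegral mu setT (fun y : borel X => j x y ^+ 2))).
Proof.
move=> mj [M hM].
have mF2 : measurable_fun [set: (borel X * borel X)%type] (fun p : borel X * borel X => (j p.1 p.2)^+2).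
  exact: measurable_funX.
have sec : forall x, measurable_fun [set: borel X] (fun y : borel X => j x y ^+ 2).
  move=> x; have h : measurable_fun [set: borel X] (fun y : borel X => ((x, y) : borel X * borel X)).
    exact: measurable_fun_pair.
  exact: (measurableT_comp mF2 h).
apply: bint.
  apply: (@Rpartial_meas _ _ _ _ _ mu mu (fun p => j p.1 p.2 ^+ 2) mF2).
  by exists (M * M) => p; rewrite expr2; exact: (@bndM _ _ _ _ _ _ (hM p.1) (hM p.1) p.2).
exists (M * M) => x; apply: Rint_bound; first exact: sec.
by move=> y; rewrite expr2; exact: (@bndM _ _ _ _ _ _ (hM x) (hM x) y).
Qed.
Section main.
Context {R : realType} (G X : ptopologicalType) (mul : G -> G -> G) (inv : G -> G)
  (one : G) (lam : probability (borel G) R) (act : G -> X -> X)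
  (mu : probability (borel X) R).
Hypothesis mulA : forall a b c, mul a (mul b c) = mul (mul a b) c.
Hypothesis mul1g : forall a, mul one a = a.
Hypothesis mulg1 : forall a, mul a one = a.
Hypothesis mulVg : forall a, mul (inv a) a = one.
Hypothesis mulgV : forall a, mul a (inv a) = one.
Hypothesis mulc : continuous (fun p : G * G => mul p.1 p.2).
Hypothesis invc : continuous inv.
Hypothesis haar : haar_probability mul lam.
Hypothesis act1 : forall x, act one x = x.
Hypothesis actM : forall g h x, act (mul g h) x = act g (act h x).
Hypothesis mact : measurable_fun [set: (borel G * borel X)%type]
        ((fun p : borel G * borel X => act p.1 p.2) : _ -> borel X).
Hypothesis muinv : forall (g : G) (A : set (borel X)), measurable A ->
     mu (act g @^-1` A) = mu A.

Lemma invK a : inv (inv a) = a.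
Proof. by rewrite -[LHS]mulg1 -(mulVg a) mulA mulVg mul1g. Qed.

Lemma invM a b : inv (mul a b) = mul (inv b) (inv a).
Proof.
have e : mul (mul a b) (mul (inv b) (inv a)) = one.
  by rewrite -mulA (mulA b) mulgV mul1g mulgV.
by rewrite -[LHS]mulg1 -e mulA mulVg mul1g.
Qed.

Lemma mul_cont g : continuous (mul g).
Proof.
move=> h; apply: (@continuous_comp _ _ _ (fun h => (g, h)) (fun p : G * G => mul p.1 p.2)).
  by apply: cvg_pair; [exact: cvg_cst | exact: cvg_id].
exact: mulc.
Qed.

Lemma mul_meas g : measurable_fun [set: borel G] (mul g : borel G -> borel G).
Proof. exact: cont_meas (mul_cont g). Qed.

Lemma inv_meas : measurable_fun [set: borel G] (inv : borel G -> borel G).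
Proof. exact: cont_meas. Qed.

Lemma actz_meas z : measurable_fun [set: borel G] ((fun g => act g z) : borel G -> borel X).
Proof.
have h : measurable_fun setT (fun g : borel G => ((g, z) : borel G * borel X)).
  exact: measurable_fun_pair.
exact: (measurableT_comp mact h).
Qed.

Lemma actg_meas g : measurable_fun [set: borel X] ((act g) : borel X -> borel X).
Proof.
have h : measurable_fun setT (fun x : borel X => ((g, x) : borel G * borel X)).
  exact: measurable_fun_pair.
exact: (measurableT_comp mact h).
Qed.

Lemma leftinv_int g (F : borel G -> R) : measurable_fun setT F ->
  (exists M, forall x, `|F x| <= M) ->
  Rintegral lam setT (fun h => F (mul g h)) = Rintegral lam setT F.
Proof.
apply: Rint_invariant; first exact: mul_meas.
move=> A mA; rewrite -(haar (inv g) A mA); congr (lam _).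
apply/seteqP; split => x /=.
  by move=> Ax; exists (mul g x) => //; rewrite mulA mulVg mul1g.
by move=> [a Aa <-]; rewrite mulA mulgV mul1g.
Qed.


Definition Pf (f : X -> R) (z : X) := Rintegral lam setT (fun u : borel G => f (act u z)).

Section fixf.
Variable f : borel X -> R.
Hypothesis mf : measurable_fun setT f.
Variable M : R.
Hypothesis hM : forall x, `|f x| <= M.

Lemma mfa z : measurable_fun [set: borel G] (fun u => f (act u z)).
Proof. exact: (measurableT_comp mf (actz_meas z)). Qed.

Lemma mfi z : measurable_fun [set: borel G] (fun u => f (act (inv u) z)).
Proof. exact: (measurableT_comp (mfa z) inv_meas). Qed.

Lemma inv_int z :
  Rintegral lam setT (fun u => f (act (inv u) z)) = Pf f z.
Proof.
pose Phi := fun p : borel G * borel G => f (act (inv p.1) (act p.2 z)).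
have mPhi : measurable_fun setT Phi.
  apply: (measurableT_comp mf).
  have h : measurable_fun setT (fun p : borel G * borel G =>
     ((inv p.1, act p.2 z) : borel G * borel X)).
    apply: measurable_fun_pair.
      exact: (measurableT_comp inv_meas measurable_fst).
    exact: (measurableT_comp (actz_meas z) measurable_snd).
  exact: (measurableT_comp mact h).
have bPhi : exists M, forall p, `|Phi p| <= M by exists M => ?; apply: hM.
have e := @Rfub _ _ _ _ _ lam lam Phi mPhi bPhi.
have L g : Rintegral lam setT (fun h => Phi (g, h)) = Pf f z.
  transitivity (Rintegral lam setT (fun h => (fun u => f (act u z)) (mul (inv g) h))).
    by apply: eq_Rintegral => h _; rewrite /Phi /= actM.
  apply: leftinv_int; [exact: mfa | by exists M => ?; apply: hM].
have Rr h : Rintegral lam setT (fun g => Phi (g, h)) =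
    Rintegral lam setT (fun u => f (act (inv u) z)).
  transitivity (Rintegral lam setT (fun g => (fun u => f (act (inv u) z)) (mul (inv h) g))).
    by apply: eq_Rintegral => g _; rewrite /Phi /= invM invK actM.
  apply: leftinv_int; [exact: mfi | by exists M => ?; apply: hM].
transitivity (Rintegral lam setT (fun _ : borel G =>
   Rintegral lam setT (fun u => f (act (inv u) z)))); first by rewrite Rint_cst.
transitivity (Rintegral lam setT (fun h => Rintegral lam setT (fun g => Phi (g, h)))).
  by apply: eq_Rintegral => h _; exact/esym/Rr.
rewrite -e.
transitivity (Rintegral lam setT (fun _ : borel G => Pf f z)).
  by apply: eq_Rintegral => g _; exact: L.
by rewrite Rint_cst.
Qed.

Lemma Pf_inv g z : Pf f (act g z) = Pf f z.
Proof.
rewrite /Pf -[LHS]/(Pf f (act g z)) -inv_int.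
transitivity (Rintegral lam setT (fun u => (fun v => f (act (inv v) z)) (mul (inv g) u))).
  by apply: eq_Rintegral => u _; rewrite /= invM invK actM.
transitivity (Rintegral lam setT (fun v => f (act (inv v) z))).
  apply: (leftinv_int (inv g) (fun v => f (act (inv v) z))); [exact: mfi | by exists M => ?; apply: hM].
exact: inv_int.
Qed.

Lemma Pf_meas : measurable_fun [set: borel X] (Pf f : borel X -> R).
Proof.
have := @Rpartial_meas R _ _ (borel X) (borel G) mu lam (fun p => f (act p.2 p.1)).
apply.
  apply: (measurableT_comp mf).
  have h : measurable_fun setT (fun p : borel X * borel G =>
     ((p.2, p.1) : borel G * borel X)).
    apply: measurable_fun_pair; [exact: measurable_snd | exact: measurable_fst].
  exact: (measurableT_comp mact h).
by exists M => ?; apply: hM.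
Qed.

Lemma Pf_bound z : `|Pf f z| <= M.
Proof. apply: Rint_bound => //; exact: mfa. Qed.


Lemma PfM_meas : measurable_fun [set: borel X] (fun y : borel X => Pf f y * f y).
Proof. exact: (measurable_funM Pf_meas mf). Qed.

Lemma key_eq :
  Rintegral mu setT (fun y => Pf f y * Pf f y) =
  Rintegral mu setT (fun y => Pf f y * f y).
Proof.
pose Phi := fun p : borel X * borel G => Pf f p.1 * f (act p.2 p.1).
have mPhi : measurable_fun setT Phi.
  apply: measurable_funM.
    exact: (measurableT_comp Pf_meas measurable_fst).
  apply: (measurableT_comp mf).
  have h : measurable_fun setT (fun p : borel X * borel G =>
     ((p.2, p.1) : borel G * borel X)).
    apply: measurable_fun_pair; [exact: measurable_snd | exact: measurable_fst].
  exact: (measurableT_comp mact h).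
have bPhi : exists N, forall p, `|Phi p| <= N.
  exists (M * M) => p; rewrite /Phi normrM.
  apply: ler_pM; [exact: normr_ge0|exact: normr_ge0|exact: Pf_bound|exact: hM].
have e := @Rfub _ _ _ _ _ mu lam Phi mPhi bPhi.
transitivity (Rintegral mu setT (fun y => Rintegral lam setT (fun g => Phi (y, g)))).
  apply: eq_Rintegral => y _; rewrite /Phi /=.
  rewrite RintegralZl //; apply: bint; first exact: mfa.
  by exists M => ?; apply: hM.
rewrite e.
transitivity (Rintegral lam setT (fun _ : borel G => Rintegral mu setT (fun y => Pf f y * f y))); last first.
  by rewrite Rint_cst.
apply: eq_Rintegral => g _; rewrite /Phi /=.
transitivity (Rintegral mu setT (fun y => (fun y => Pf f y * f y) (act g y))).
  by apply: eq_Rintegral => y _; rewrite /= Pf_inv.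
apply: (@Rint_invariant _ _ _ mu (act g) (actg_meas g) (muinv g) _ PfM_meas).
exists (M * M) => y; rewrite normrM.
apply: ler_pM; [exact: normr_ge0|exact: normr_ge0|exact: Pf_bound|exact: hM].
Qed.

Lemma perx :
  Rintegral mu setT (fun y => f y ^+ 2) =
  Rintegral mu setT (fun y => Pf f y ^+ 2) +
  Rintegral mu setT (fun y => (f y - Pf f y) ^+ 2).
Proof.
have mP := Pf_meas.
have bP := Pf_bound.
have bf2 : forall y, `|f y ^+ 2| <= M * M.
  by move=> y; rewrite expr2; exact: (@bndM _ _ _ _ _ _ hM hM y).
have bP2 : forall y, `|Pf f y ^+ 2| <= M * M.
  by move=> y; rewrite expr2; exact: (@bndM _ _ _ _ _ _ bP bP y).
have bPf : forall y, `|Pf f y * f y| <= M * M by exact: (@bndM _ _ _ _ _ _ bP hM).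
have bPP : forall y, `|Pf f y * Pf f y| <= M * M by exact: (@bndM _ _ _ _ _ _ bP bP).
have mf2 : measurable_fun [set: borel X] (fun y => f y ^+ 2) by exact: measurable_funX.
have mP2 : measurable_fun [set: borel X] (fun y => Pf f y ^+ 2) by exact: measurable_funX.
have mPf : measurable_fun [set: borel X] (fun y => Pf f y * f y) by exact: measurable_funM.
have mPP : measurable_fun [set: borel X] (fun y => Pf f y * Pf f y) by exact: measurable_funM.
have i1 : mu.-integrable setT (EFin \o (fun y => f y ^+ 2)) by apply: bint => //; exists (M * M).
have i2 : mu.-integrable setT (EFin \o (fun y => Pf f y ^+ 2)) by apply: bint => //; exists (M * M).
have i3 : mu.-integrable setT (EFin \o (fun y => Pf f y * f y)) by apply: bint => //; exists (M * M).
have i4 : mu.-integrable setT (EFin \o (fun y => Pf f y * Pf f y)) by apply: bint => //; exists (M * M).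
have i5 : mu.-integrable setT (EFin \o (fun y => Pf f y * f y - Pf f y * Pf f y)).
  apply: bint; first exact: measurable_funB.
  by exists (M * M + M * M); exact: (@bndB _ _ _ _ _ _ bPf bPP).
have i6 : mu.-integrable setT (EFin \o (fun y => f y ^+ 2 - Pf f y ^+ 2)).
  apply: bint; first exact: measurable_funB.
  by exists (M * M + M * M); exact: (@bndB _ _ _ _ _ _ bf2 bP2).
have i7 : mu.-integrable setT (EFin \o (fun y => 2 * (Pf f y * f y - Pf f y * Pf f y))).
  apply: bint.
    apply: measurable_funM => //; exact: measurable_funB.
  exists (`|2| * (M * M + M * M)); apply: bndZ.
  exact: (@bndB _ _ _ _ _ _ bPf bPP).
transitivity (Rintegral mu setT (fun y => Pf f y ^+ 2) +
  Rintegral mu setT (fun y => (f y ^+ 2 - Pf f y ^+ 2) - 2 * (Pf f y * f y - Pf f y * Pf f y))); last first.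
  by congr (_ + _); apply: eq_Rintegral => y _; ring.
rewrite RintegralB // RintegralB // RintegralZl // RintegralB // -key_eq.
have -> : Rintegral mu setT (fun y => Pf f y ^+ 2) = Rintegral mu setT (fun y => Pf f y * Pf f y).
  by apply: eq_Rintegral => y _; rewrite expr2.
ring.
Qed.

End fixf.

Lemma core (k : X -> X -> R) :
  measurable_fun [set: (borel X * borel X)%type]
    (fun p : borel X * borel X => k p.1 p.2) ->
  (forall x y, k x y = k y x) ->
  pos_def_kernel k ->
  (exists M : R, forall x, k x x <= M) ->
  Nsq mu k = (Nsq mu (kbar lam act k) + Nsq mu (kperp lam act k))%E.
Proof.
move=> mk ks hpd [Mk hMk].
have kb := @kbound R X k Mk ks hpd hMk.
have mkx : forall x, measurable_fun [set: borel X] (k x : borel X -> R).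
  move=> x; have h : measurable_fun [set: borel X] (fun y : borel X => ((x, y) : borel X * borel X)).
    exact: measurable_fun_pair.
  exact: (measurableT_comp mk h).
have mkbar : measurable_fun [set: (borel X * borel X)%type]
    (fun p : borel X * borel X => kbar lam act k p.1 p.2).
  pose F := fun q : (borel X * borel X) * borel G => k q.1.1 (act q.2 q.1.2).
  have mF : measurable_fun setT F.
    have h : measurable_fun setT (fun q : (borel X * borel X) * borel G =>
       ((q.2, q.1.2) : borel G * borel X)).
      apply: measurable_fun_pair; first exact: measurable_snd.
      exact: (measurableT_comp measurable_snd measurable_fst).
    have h2 : measurable_fun setT (fun q : (borel X * borel X) * borel G =>
       ((q.1.1, act q.2 q.1.2) : borel X * borel X)).
      apply: measurable_fun_pair.
        exact: (measurableT_comp measurable_fst measurable_fst).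
      exact: (measurableT_comp mact h).
    exact: (measurableT_comp mk h2).
  have := @Rpartial_meas _ _ _ _ _ (mu \x mu)%E lam F mF.
  apply; by exists Mk => q; exact: kb.
have bkbar : forall x y, `|kbar lam act k x y| <= Mk.
  move=> x y; exact: (@Pf_bound (k x) (mkx x) Mk (kb x) y).
have mkperp : measurable_fun [set: (borel X * borel X)%type]
    (fun p : borel X * borel X => kperp lam act k p.1 p.2).
  exact: (measurable_funB mk mkbar).
have bkperp : forall x y, `|kperp lam act k x y| <= Mk + Mk.
  move=> x y; exact: (@bndB _ _ _ _ _ _ (kb x) (bkbar x) y).
rewrite (@NsqE R X mu _ mk); last by exists Mk.
rewrite (@NsqE R X mu _ mkbar); last by exists Mk.
rewrite (@NsqE R X mu _ mkperp); last by exists (Mk + Mk).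
rewrite -EFinD; congr EFin.
rewrite -RintegralD //; last 2 first.
- by apply: outer_int => //; exists Mk.
- by apply: outer_int => //; exists (Mk + Mk).
apply: eq_Rintegral => x _.
exact: (@perx (k x) (mkx x) Mk (kb x)).
Qed.

End main.

Theorem lemma5p10 (R : realType) (G X : ptopologicalType)
  (mul : G -> G -> G) (inv : G -> G) (one : G)
  (lam : probability (borel G) R)
  (act : G -> X -> X)
  (mu : probability (borel X) R)
  (k : X -> X -> R) :
  compact_sc_hausdorff_group mul inv one ->
  haar_probability mul lam ->
  polish_space R X ->
  measurable_action mul one act ->
  (forall (g : G) (A : set (borel X)), measurable A ->
     mu (act g @^-1` A) = mu A) ->
  msupport mu = [set: X] ->
  measurable_fun [set: (borel X * borel X)%type]
    (fun p : borel X * borel X => k p.1 p.2) ->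
  (forall x y, k x y = k y x) ->
  pos_def_kernel k ->
  (forall x : X, continuous (fun y : X => k y x)) ->
  (exists M : R, forall x, k x x <= M) ->
  Nsq mu k = (Nsq mu (kbar lam act k) + Nsq mu (kperp lam act k))%E.
Proof.
move=> [[mulA hone hinv] [mulc invc _ _ _]] haar _ [act1 actM mact] muinv _ mk ks hpd _ hb.
have mul1g a : mul one a = a by case: (hone a).
have mulg1 a : mul a one = a by case: (hone a).
have mulVg a : mul (inv a) a = one by case: (hinv a).
have mulgV a : mul a (inv a) = one by case: (hinv a).
by apply: core.
Qed.
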